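(* Let $n\ge 1$ and let $S\in Sp(4n,\mathbb{R})$ be written in $2n\times 2n$ blocks. Suppose that for all covariance matrices $\varGamma_1,\varGamma_2\in\mathbb{R}^{2n\times 2n}$ the matrix $$S\begin{pmatrix}\varGamma_1&0\\0&\varGamma_2\end{pmatrix}S^{T}$$ is block diagonal, i.e. of the form $\begin{pmatrix}\cdot&0\\0&*\end{pmatrix}$ with $2n\times 2n$ diagonal blocks (which are covariance matrices). Then $S$ is either of the form $\begin{pmatrix}A&0\\0&D\end{pmatrix}$ or of the form $\begin{pmatrix}0&B\\C&0\end{pmatrix}$ with $A,B,C,D\in Sp(2n,\mathbb{R})$.
   Context: $\sigma=\bigoplus_{i=1}^{n}\omega$ with $\omega=\begin{pmatrix}0&1\\-1&0\end{pmatrix}$ is the $2n\times 2n$ symplectic form (and $\sigma\oplus\sigma$ the $4n\times4n$ one). $Sp(2m,\mathbb{R})$ is the group of real $2m\times 2m$ matrices $S$ with $S\sigma S^T=\sigma$. A covariance matrix (CM) is a real symmetric $2n\times 2n$ matrix $\varGamma$ satisfying $\varGamma+i\sigma\ge 0$. *)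

(* Defs.v *)
From HB Require Import structures.
From mathcomp Require Import all_boot all_order all_algebra.
From mathcomp Require Import complex.
Set Implicit Arguments. Unset Strict Implicit. Unset Printing Implicit Defensive.
Import Order.TTheory GRing.Theory Num.Theory.
Local Open Scope ring_scope.

(* Symplectic form on R^m (m even): direct sum of copies of
   omega = [[0,1],[-1,0]], i.e. entry (2k,2k+1) = 1, (2k+1,2k) = -1. *)
Definition sympl_form (R : rcfType) (m : nat) : 'M[R]_m :=
  \matrix_(i < m, j < m)
    (if ~~ odd i && (j == i.+1 :> nat) then 1
     else if odd i && (j.+1 == i :> nat) then -1 else 0).

Definition symplectic (R : rcfType) (m : nat) (S : 'M[R]_m) : Prop :=
  S *m sympl_form R m *m S^T = sympl_form R m.

Definition cov_cmx (R : rcfType) (m : nat) (G : 'M[R]_m) : 'M[R[i]]_m :=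
  \matrix_(i < m, j < m) Complex (G i j) (sympl_form R m i j).

Definition psd_c (R : rcfType) (m : nat) (M : 'M[R[i]]_m) : Prop :=
  forall v : 'cV[R[i]]_m, 0 <= ((map_mx (@conjc R) v)^T *m M *m v) 0 0.

Definition covariance (R : rcfType) (m : nat) (G : 'M[R]_m) : Prop :=
  G^T = G /\ psd_c (cov_cmx G).

(* Main.v *)
Require Import Defs.
From HB Require Import structures.
From mathcomp Require Import all_boot all_order all_algebra.
From mathcomp Require Import complex.
From mathcomp Require Import zify.
Import Order.TTheory GRing.Theory Num.Theory.
Local Open Scope ring_scope.

Lemma sf_tr (R : rcfType) m : (sympl_form R m)^T = - sympl_form R m.
Proof.
apply/matrixP => i j; rewrite !mxE.
case: (boolP (odd i)) => oi; case: (boolP (odd j)) => oj /=;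
case: eqP => [e1|n1]; case: eqP => [e2|n2] /=; rewrite ?opprK ?oppr0 //; try lia.
all: try (move: oi oj; rewrite ?e1 ?e2 /= => ->; done).
all: try (move: oi oj; rewrite -?e1 -?e2 /= => ->; done).
Qed.

Lemma oddE {i} : odd i -> i = (i./2).*2.+1.
Proof. move=> oi; have := odd_double_half i; rewrite oi; lia. Qed.
Lemma evenE {i} : ~~ odd i -> i = (i./2).*2.
Proof. move=> oi; have := odd_double_half i; rewrite (negbTE oi); lia. Qed.

Definition pn (i : nat) := if odd i then i.-1 else i.+1.

Lemma pn_lt {n} (i : 'I_(n.*2)) : (pn i < n.*2)%N.
Proof.
rewrite /pn; case: (boolP (odd i)) => oi.
  have := ltn_ord i; lia.
have := evenE oi; have := ltn_ord i; lia.
Qed.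

Definition pord {n} (i : 'I_(n.*2)) : 'I_(n.*2) := Ordinal (pn_lt i).

Definition sg (R : rcfType) (i : nat) : R := if odd i then -1 else 1.

Lemma sfE (R : rcfType) n (i k : 'I_(n.*2)) :
  sympl_form R (n.*2) i k = if (k : nat) == pn i then sg R i else 0.
Proof.
rewrite mxE /pn /sg; case: (boolP (odd i)) => oi /=.
  have := oddE oi => e.
  case: eqP => [e1|n1]; case: eqP => [e2|n2] //; lia.
by [].
Qed.

Lemma pnK i : pn (pn i) = i.
Proof.
rewrite /pn; case: (boolP (odd i)) => oi.
  have e := oddE oi; rewrite e /= odd_double /=; lia.
by rewrite /= (negbTE oi).
Qed.

Lemma sg_pn (R : rcfType) i : sg R (pn i) = - sg R i.
Proof.
rewrite /pn /sg; case: (boolP (odd i)) => oi.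
  by rewrite {1}(oddE oi) /= odd_double /= opprK.
by rewrite /= (negbTE oi).
Qed.

Lemma sf_sq (R : rcfType) n :
  sympl_form R (n.*2) *m sympl_form R (n.*2) = - 1%:M.
Proof.
apply/matrixP => i j; rewrite !mxE (bigD1 (pord i)) //= big1 ?addr0; last first.
  move=> k /negbTE nk; rewrite sfE.
  have -> : ((k : nat) == pn i) = false.
    by apply/negbTE/eqP => e; move: nk; rewrite -(inj_eq val_inj) /= e eqxx.
  by rewrite mul0r.
rewrite !sfE eqxx /= pnK sg_pn.
have -> : ((j : nat) == i) = (i == j) by rewrite eq_sym.
case: (i == j); rewrite ?mulr0 ?oppr0 //.
by rewrite /sg; case: (odd i); rewrite ?mulrN ?mulNr ?opprK ?mulr1.
Qed.

Lemma sf_block (R : rcfType) n k :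
  sympl_form R (n.*2 + k) =
  block_mx (sympl_form R (n.*2)) 0 0 (sympl_form R k).
Proof.
apply/matrixP => i j.
rewrite -(splitK i) -(splitK j).
case: (split i) => i'; case: (split j) => j';
rewrite /= ?block_mxEul ?block_mxEur ?block_mxEdl ?block_mxEdr !mxE /= //.
- have := ltn_ord i'; have := ltn_ord j'.
  case: (boolP (odd i')) => oi /=.
    by case: eqP => e; rewrite ?andbF //=; lia.
  by case: eqP => e //=; have := evenE oi; lia.
- have := ltn_ord i'; have := ltn_ord j'.
  rewrite oddD odd_double /=.
  case: (boolP (odd i')) => oi /=.
    by case: eqP => e //=; have := oddE oi; lia.
  by case: eqP => e //=; lia.
- rewrite !oddD odd_double /=.
  have -> : ((n.*2 + j')%N == (n.*2 + i').+1) = (j' == i'.+1 :> nat) by apply/eqP/eqP; lia.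
  by have -> : ((n.*2 + j').+1 == (n.*2 + i')%N) = (j'.+1 == i' :> nat) by apply/eqP/eqP; lia.
Qed.

Lemma sf_neq0 (R : rcfType) n : (0 < n)%N -> sympl_form R (n.*2) != 0.
Proof.
move=> hn; have h0 : (0 < n.*2)%N by lia.
have h1 : (1 < n.*2)%N by lia.
apply/eqP => /matrixP /(_ (Ordinal h0) (Ordinal h1)); rewrite !mxE /=.
by move/eqP; rewrite oner_eq0.
Qed.

Section Cov.
Variable R : rcfType.
Local Notation RC := (real_complex R).

Lemma cov_cmxE m (G : 'M[R]_m) :
  cov_cmx G = map_mx RC G + 'i%C *: map_mx RC (sympl_form R m).
Proof.
apply/matrixP => i j; rewrite !mxE; apply/eqP; rewrite eq_complex /=.
by rewrite !mul0r !mul1r !subr0 !addr0 !add0r !eqxx.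
Qed.

Lemma cov_herm m (G : 'M[R]_m) : G^T = G ->
  (map_mx (@conjc R) (cov_cmx G))^T = cov_cmx G.
Proof.
move=> hG; apply/matrixP => i j.
move/matrixP/(_ i j): (sf_tr R m); rewrite !mxE => e2.
rewrite ?mxE /= e2.
have -> : G j i = G i j by rewrite -{1}hG mxE.
by rewrite opprK.
Qed.

Lemma psd_u {k} (u : 'cV[R[i]]_k) : 0 <= ((map_mx (@conjc R) u)^T *m u) 0 0.
Proof.
rewrite mxE; apply: sumr_ge0 => l _; rewrite !mxE mulrC; exact: mulcJ_ge0.
Qed.

Lemma cov_sq n : let M := cov_cmx (1%:M : 'M[R]_(n.*2)) in M *m M = M + M.
Proof.
rewrite /= cov_cmxE map_mx1.
set Sg := map_mx RC _.
have SS : Sg *m Sg = - 1%:M by rewrite -map_mxM sf_sq map_mxN map_mx1.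
rewrite mulmxDl mul1mx mulmxDr mulmx1 -scalemxAl -scalemxAr scalerA SS.
by rewrite -expr2 sqr_i scaleN1r opprK (addrC 1%:M (_ *: Sg)).
Qed.

Lemma cov1 n : covariance (1%:M : 'M[R]_(n.*2)).
Proof.
split; first exact: tr_scalar_mx.
move=> v; set M := cov_cmx _.
have H := psd_u (M *m v).
rewrite map_mxM trmx_mul cov_herm ?tr_scalar_mx // -/M mulmxA -(mulmxA _ M M) cov_sq in H.
move: H; rewrite mulmxDr mulmxDl mxE -mulr2n pmulrn_lge0 //.
Qed.

Lemma cov1x n (x : 'cV[R]_(n.*2)) : covariance (1%:M + x *m x^T).
Proof.
have hs : (1%:M + x *m x^T)^T = 1%:M + x *m x^T.
  by rewrite linearD /= tr_scalar_mx trmx_mul trmxK.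
split => // v.
have -> : cov_cmx (1%:M + x *m x^T) = cov_cmx 1%:M + map_mx RC (x *m x^T).
  apply/matrixP => i j; rewrite !mxE; apply/eqP; rewrite eq_complex /=.
  by rewrite addr0 !eqxx.
rewrite mulmxDr mulmxDl mxE; apply: addr_ge0; first exact: (proj2 (cov1 n)).
set y := map_mx RC x.
have := psd_u (y^T *m v).
rewrite map_mxM.
have -> : map_mx (@conjc R) (y^T) = y^T.
  by apply/matrixP => i j; rewrite !mxE conjc_real.
rewrite trmx_mul trmxK map_mxM map_trmx -/y !mulmxA.
by rewrite /y map_trmx.
Qed.
End Cov.

Lemma outer0 (R : rcfType) p q (a : 'cV[R]_p) (c : 'cV[R]_q) :
  a *m c^T = 0 -> a = 0 \/ c = 0.
Proof.
move=> H; case: (pickP (fun i => a i 0 != 0)) => [i hi|h]; last first.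
  left; apply/matrixP => i j; rewrite (ord1 j) mxE.
  by move: (h i) => /negbFE/eqP.
right; apply/matrixP => j k; rewrite (ord1 k).
move/matrixP/(_ i j): H; rewrite !mxE big_ord1 !mxE => /eqP.
by rewrite mulf_eq0 (negbTE hi) /= => /eqP.
Qed.

Lemma union (R : rcfType) p q r (A : 'M[R]_(p, r)) (C : 'M[R]_(q, r)) :
  (forall x : 'cV_r, A *m x = 0 \/ C *m x = 0) -> A = 0 \/ C = 0.
Proof.
move=> H.
have ex : forall p' (B : 'M[R]_(p', r)), B != 0 -> exists x : 'cV_r, B *m x != 0.
  move=> p' B nB; case: (pickP (fun j => col j B != 0)) => [j hj|h].
    by exists (delta_mx j 0); rewrite -colE.
  case/eqP: nB; apply/matrixP => i j.
  by move: (h j) => /negbFE/eqP/matrixP/(_ i 0); rewrite !mxE.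
case: (eqVneq A 0) => [->|nA]; first by left.
case: (eqVneq C 0) => [->|nC]; first by right.
exfalso; have [x hx] := ex _ _ nA; have [y hy] := ex _ _ nC.
have hCx : C *m x = 0 by case: (H x) => // e; rewrite e eqxx in hx.
have hAy : A *m y = 0 by case: (H y) => // e; rewrite e eqxx in hy.
case: (H (x + y)); rewrite !mulmxDr ?hCx ?hAy ?addr0 ?add0r => e.
  by rewrite e eqxx in hx.
by rewrite e eqxx in hy.
Qed.

Theorem lemma1 (R : rcfType) (n : nat) (hn : (0 < n)%N)
  (S : 'M[R]_(n.*2 + n.*2)) :
  symplectic S ->
  (forall G1 G2 : 'M[R]_(n.*2), covariance G1 -> covariance G2 ->
     ursubmx (S *m block_mx G1 0 0 G2 *m S^T) = 0 /\
     dlsubmx (S *m block_mx G1 0 0 G2 *m S^T) = 0) ->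
  (ursubmx S = 0 /\ dlsubmx S = 0 /\
     symplectic (ulsubmx S) /\ symplectic (drsubmx S)) \/
  (ulsubmx S = 0 /\ drsubmx S = 0 /\
     symplectic (ursubmx S) /\ symplectic (dlsubmx S)).
Proof.
move=> hS H.
rewrite -[S]submxK in hS H *.
rewrite block_mxKul block_mxKur block_mxKdl block_mxKdr.
move: (ulsubmx S) (ursubmx S) (dlsubmx S) (drsubmx S) hS H => A B C D hS H.
have key : forall G1 G2, covariance G1 -> covariance G2 ->
    A *m G1 *m C^T + B *m G2 *m D^T = 0.
  move=> G1 G2 c1 c2; have [h _] := H G1 G2 c1 c2; move: h.
  rewrite tr_block_mx !mulmx_block block_mxKur.
  by rewrite ?mulmx0 ?mul0mx ?addr0 ?add0r.
have e0 := key _ _ (cov1 R n) (cov1 R n).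
rewrite !mulmx1 in e0.
have hAC : forall x : 'cV_(n.*2), A *m x = 0 \/ C *m x = 0.
  move=> x; apply: outer0.
  have e1 := key _ _ (cov1x R n x) (cov1 R n).
  rewrite mulmxDr mulmxDl !mulmx1 addrAC e0 add0r mulmxA in e1.
  by rewrite trmx_mul !mulmxA.
have hBD : forall x : 'cV_(n.*2), B *m x = 0 \/ D *m x = 0.
  move=> x; apply: outer0.
  have e1 := key _ _ (cov1 R n) (cov1x R n x).
  rewrite mulmxDr mulmxDl !mulmx1 addrA e0 add0r mulmxA in e1.
  by rewrite trmx_mul !mulmxA.
rewrite /symplectic sf_block tr_block_mx !mulmx_block in hS.
rewrite ?mulmx0 ?mul0mx ?addr0 ?add0r in hS.
case/eq_block_mx: hS => hul hur hdl hdr.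
have nz := sf_neq0 R n hn.
have [A0|C0] := union _ _ _ _ A C hAC; have [B0|D0] := union _ _ _ _ B D hBD.
- by rewrite A0 B0 !mul0mx addr0 in hul; rewrite -hul eqxx in nz.
- right; rewrite A0 D0 in hul hdr *.
  by rewrite !mul0mx add0r in hul; rewrite !mul0mx addr0 in hdr.
- left; rewrite C0 B0 in hul hdr *.
  by rewrite !mul0mx addr0 in hul; rewrite !mul0mx add0r in hdr.
- by rewrite C0 D0 !mul0mx addr0 in hdr; rewrite -hdr eqxx in nz.
Qed.
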